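(* Let $\Gamma$ be a $Q$-polynomial distance-regular graph with vertex set $X$ and diameter $D$, and suppose $\Gamma$ is pseudo-vertex-transitive. Then for all integers $0\le i\le D$ and all vertices $x,y\in X$, the $i$-th subconstituents $\Delta_i(x)$ and $\Delta_i(y)$ have the same spectrum.
   Context: Let $\Gamma$ have distance $\partial$, adjacency matrix $A$, $V=\mathbb{C}^X$. For $x\in X$ and $0\le i\le D$, $\Delta_i(x)$ is the subgraph induced on $\{y:\partial(x,y)=i\}$, and $E^*_i(x)$ is the diagonal matrix with $(E^*_i(x))_{yy}=1$ if $\partial(x,y)=i$ and $0$ otherwise. The Terwilliger algebra $T(x)$ is the subalgebra of $\mathrm{Mat}_X(\mathbb{C})$ generated by $A,E^*_0(x),\dots,E^*_D(x)$. $\Gamma$ is pseudo-vertex-transitive if for all $x,y\in X$: (i) there is a $\mathbb{C}$-algebra isomorphism $T(x)\to T(y)$ sending $A\mapsto A$ and $E^*_i(x)\mapsto E^*_i(y)$ for all $i$; and (ii) there is a $\mathbb{C}$-linear bijection $\rho:V\to V$ with $\rho A=A\rho$ and $\rho E^*_i(x)=E^*_i(y)\rho$ for all $i$. The spectrum of a graph is the multiset of eigenvalues of its adjacency matrix. $Q$-polynomial means: the primitive idempotents of the Bose–Mesner algebra can be ordered $E_0,\dots,E_D$ so that the Krein parameters $q^h_{ij}$ (defined by $E_i\circ E_j=|X|^{-1}\sum_h q^h_{ij}E_h$, $\circ$ the entrywise product) vanish when one of $h,i,j$ exceeds the sum of the other two and are nonzero when one equals the sum of the other two. *)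

(* Defs.v *)
From HB Require Import structures.
From mathcomp Require Import all_boot all_order all_algebra.
From mathcomp Require Import Rstruct complex.
From Stdlib Require Import Reals.
Set Implicit Arguments. Unset Strict Implicit. Unset Printing Implicit Defensive.
Import Order.TTheory GRing.Theory Num.Theory.
Local Open Scope ring_scope.

Definition C : numClosedFieldType := (Rdefinitions.R)[i].

Section Graph.
Variables (n : nat) (adj : rel 'I_n).

Fixpoint walk (k : nat) (x y : 'I_n) : bool :=
  match k with
  | 0 => x == y
  | k'.+1 => [exists z, adj x z && walk k' z y]
  end.

Definition connected_graph : Prop := forall x y : 'I_n, exists k, walk k x y.

(* path-length distance: least k with a walk of length k from x to y
   (in a connected graph on n vertices this is < n). *)
Definition dist (x y : 'I_n) : nat := find (fun k => walk k x y) (iota 0 n).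

Definition diameter : nat := \max_(x : 'I_n) \max_(y : 'I_n) dist x y.

Definition simple_graph : Prop :=
  symmetric adj /\ irreflexive adj.

(* distance-regular: connected simple graph such that
   p^h_{ij} = |{z : d(x,z)=i, d(y,z)=j}| depends only on h = d(x,y), i, j *)
Definition distance_regular : Prop :=
  [/\ simple_graph, connected_graph &
   forall x y x' y' : 'I_n, dist x y = dist x' y' ->
     forall i j : nat,
       #|[set z | (dist x z == i) && (dist y z == j)]| =
       #|[set z | (dist x' z == i) && (dist y' z == j)]| ].

Definition adjmx : 'M[C]_n := \matrix_(x, y) (adj x y)%:R.

Definition distmx (i : nat) : 'M[C]_n := \matrix_(x, y) (dist x y == i)%:R.

(* membership in the Bose-Mesner algebra span{A_0,...,A_D} *)
Definition in_BM (M : 'M[C]_n) : Prop :=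
  exists c : 'I_diameter.+1 -> C, M = \sum_(i < diameter.+1) c i *: distmx i.

Definition primitive_idempotents (E : 'I_diameter.+1 -> 'M[C]_n) : Prop :=
  [/\ forall i, in_BM (E i),
      forall i, E i != 0,
      forall i j, E i *m E j = (if i == j then E i else 0) &
      \sum_(i < diameter.+1) E i = 1%:M ].

Definition hadamard (M N : 'M[C]_n) : 'M[C]_n := \matrix_(x, y) (M x y * N x y).

(* q h i j = Krein parameter q^h_{ij} :  E_i o E_j = |X|^{-1} sum_h q^h_{ij} E_h *)
Definition krein_parameters (E : 'I_diameter.+1 -> 'M[C]_n)
  (q : 'I_diameter.+1 -> 'I_diameter.+1 -> 'I_diameter.+1 -> C) : Prop :=
  forall i j, hadamard (E i) (E j) =
              (n%:R)^-1 *: \sum_(h < diameter.+1) q h i j *: E h.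

Definition Q_polynomial : Prop :=
  exists (E : 'I_diameter.+1 -> 'M[C]_n)
         (q : 'I_diameter.+1 -> 'I_diameter.+1 -> 'I_diameter.+1 -> C),
  [/\ primitive_idempotents E, krein_parameters E q,
      (forall h i j : 'I_diameter.+1,
         [|| ltn (addn i j) h, ltn (addn h j) i | ltn (addn h i) j] -> q h i j = 0) &
      (forall h i j : 'I_diameter.+1,
         [|| eqn h (addn i j), eqn i (addn h j) | eqn j (addn h i)] ->
         q h i j != 0) ].

Definition dual_idem (x : 'I_n) (i : nat) : 'M[C]_n :=
  \matrix_(y, z) ((y == z) && (dist x y == i))%:R.

Definition Tgen (x : 'I_n) (g : option 'I_diameter.+1) : 'M[C]_n :=
  match g with None => adjmx | Some i => dual_idem x i end.

Definition Tword (x : 'I_n) (w : seq (option 'I_diameter.+1)) : 'M[C]_n :=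
  foldr (fun g M => Tgen x g *m M) 1%:M w.

(* membership in the Terwilliger algebra T(x): linear combinations of words
   in the generators A, E*_0(x), ..., E*_D(x) *)
Definition in_T (x : 'I_n) (M : 'M[C]_n) : Prop :=
  exists s : seq (C * seq (option 'I_diameter.+1)),
    M = \sum_(p <- s) p.1 *: Tword x p.2.

Definition T_iso (x y : 'I_n) : Prop :=
  exists phi : 'M[C]_n -> 'M[C]_n,
     (forall M, in_T x M -> in_T y (phi M))
  /\ (forall M N, in_T x M -> in_T x N -> phi (M + N) = phi M + phi N)
  /\ (forall (c : C) M, in_T x M -> phi (c *: M) = c *: phi M)
  /\ (forall M N, in_T x M -> in_T x N -> phi (M *m N) = phi M *m phi N)
  /\ (forall M N, in_T x M -> in_T x N -> phi M = phi N -> M = N)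
  /\ (forall N, in_T y N -> exists2 M, in_T x M & phi M = N)
  /\ phi adjmx = adjmx
  /\ (forall i : 'I_diameter.+1, phi (dual_idem x i) = dual_idem y i).

Definition V_iso (x y : 'I_n) : Prop :=
  exists rho : 'M[C]_n,
  [/\ rho \in unitmx, rho *m adjmx = adjmx *m rho &
      forall i : 'I_diameter.+1, rho *m dual_idem x i = dual_idem y i *m rho ].

Definition pseudo_vertex_transitive : Prop :=
  forall x y : 'I_n, T_iso x y /\ V_iso x y.

Definition subconst_set (x : 'I_n) (i : nat) : {set 'I_n} := [set y | dist x y == i].

Definition subconst_adj (x : 'I_n) (i : nat) : 'M[C]_(#|subconst_set x i|) :=
  \matrix_(a, b) (adj (enum_val a) (enum_val b))%:R.

End Graph.

(* spectrum of a square matrix, as a multiset: eigenvalue |-> algebraic multiplicity *)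
Definition spectrum (m : nat) (M : 'M[C]_m) : C -> nat :=
  fun lam => mup lam (char_poly M).

Definition same_spectrum (m1 m2 : nat) (M1 : 'M[C]_m1) (M2 : 'M[C]_m2) : Prop :=
  forall lam : C, spectrum M1 lam = spectrum M2 lam.

(* Main.v *)
Require Import Defs.
From mathcomp Require Import all_boot all_order all_algebra.
Set Implicit Arguments. Unset Strict Implicit. Unset Printing Implicit Defensive.
Import Order.TTheory GRing.Theory Num.Theory.
Local Open Scope ring_scope.

Lemma char_poly_sim (R : comNzRingType) m (B : 'M[R]_m) (P Q : 'M[R]_m) :
  Q *m P = 1%:M -> char_poly (P *m B *m Q) = char_poly B.
Proof.
move=> QP; have PQ := mulmx1C QP.
rewrite /char_poly /char_poly_mx.
have -> : 'X%:M - map_mx polyC (P *m B *m Q) =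
   map_mx polyC P *m ('X%:M - map_mx polyC B) *m map_mx polyC Q.
  rewrite mulmxBr mulmxBl !map_mxM; congr (_ - _).
  by rewrite scalar_mxC -mulmxA -map_mxM PQ map_mx1 mulmx1.
rewrite !det_mulmx mulrC mulrA -det_mulmx -map_mxM QP map_mx1 det1 mul1r //.
Qed.

Lemma char_poly_sim2 (R : fieldType) m1 m2 (B1 : 'M[R]_m1) (B2 : 'M[R]_m2)
  (P : 'M[R]_(m2, m1)) (Q : 'M[R]_(m1, m2)) :
  P *m Q = 1%:M -> Q *m P = 1%:M -> P *m B1 = B2 *m P ->
  char_poly B1 = char_poly B2.
Proof.
move=> PQ QP PB.
have le21 : (m2 <= m1)%N.
  have := mxrankM_maxl P Q; rewrite PQ mxrank1 => h.
  exact: leq_trans h (rank_leq_col P).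
have le12 : (m1 <= m2)%N.
  have := mxrankM_maxl Q P; rewrite QP mxrank1 => h.
  exact: leq_trans h (rank_leq_col Q).
have e : m1 = m2 by apply/eqP; rewrite eqn_leq le12 le21.
subst m2.
have -> : B2 = P *m B1 *m Q by rewrite PB -mulmxA PQ mulmx1.
by rewrite char_poly_sim.
Qed.

Section Sel.
Variables (n : nat) (S : {set 'I_n}).
Definition selm : 'M[C]_(#|S|, n) := \matrix_(a, z) (enum_val a == z)%:R.

Lemma sel_selT : selm *m selm^T = 1%:M.
Proof.
apply/matrixP => a b; rewrite !mxE.
rewrite (bigD1 (enum_val a)) //= (@big1 C 0 +%R) ?addr0.
  rewrite !mxE eqxx mul1r.
  by case: (eqVneq a b) => [->|ne]; rewrite ?eqxx // (inj_eq enum_val_inj) eq_sym (negbTE ne).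
by move=> z nz; rewrite !mxE eq_sym (negbTE nz) mul0r.
Qed.

Lemma selT_sel : selm^T *m selm = \matrix_(y, z) ((y == z) && (y \in S))%:R.
Proof.
apply/matrixP => y z; rewrite !mxE.
case: (boolP (y \in S)) => yS.
  rewrite (bigD1 (enum_rank_in yS y)) //= (@big1 C 0 +%R) ?addr0.
    by rewrite !mxE enum_rankK_in // eqxx mul1r andbT.
  move=> a ne; rewrite !mxE.
  case: (eqVneq (enum_val a) y) => [e|]; last by rewrite mul0r.
  by case/eqP: ne; apply: enum_val_inj; rewrite e enum_rankK_in.
rewrite andbF (@big1 C 0 +%R) // => a _; rewrite !mxE.
case: (eqVneq (enum_val a) y) => [e|]; last by rewrite mul0r.
by move: (enum_valP a); rewrite e (negbTE yS).
Qed.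
End Sel.

Lemma alg_core m1 m2 n (Jx : 'M[C]_(m1, n)) (Jy : 'M[C]_(m2, n)) (A r ri : 'M[C]_n) :
  Jx *m Jx^T = 1%:M -> Jy *m Jy^T = 1%:M ->
  r *m (Jx^T *m Jx) = (Jy^T *m Jy) *m r -> r *m A = A *m r ->
  r *m ri = 1%:M -> ri *m r = 1%:M ->
  let P := Jy *m r *m Jx^T in let Q := Jx *m ri *m Jy^T in
  [/\ P *m Q = 1%:M, Q *m P = 1%:M &
      P *m (Jx *m A *m Jx^T) = (Jy *m A *m Jy^T) *m P].
Proof.
set Ex := Jx^T *m Jx; set Ey := Jy^T *m Jy.
move=> JJx JJy rE rA rri rir P Q.
have riE : ri *m Ey = Ex *m ri.
  by rewrite -[ri *m Ey]mulmx1 -rri mulmxA -(mulmxA ri) -rE mulmxA rir mul1mx.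
have JEy : Jy *m Ey = Jy by rewrite /Ey mulmxA JJy mul1mx.
have JEx : Jy *m Ey = Jy by rewrite /Ey mulmxA JJy mul1mx.
have EJx : Ex *m Jx^T = Jx^T by rewrite /Ex -mulmxA JJx mulmx1.
have EJy : Ey *m Jy^T = Jy^T by rewrite /Ey -mulmxA JJy mulmx1.
have JEx' : Jx *m Ex = Jx by rewrite /Ex mulmxA JJx mul1mx.
split; rewrite /P /Q.
- rewrite !mulmxA -(mulmxA _ Jx^T) -/Ex -(mulmxA _ r) rE !mulmxA JJy mul1mx.
  by rewrite -(mulmxA _ r) rri mulmx1 JJy.
- rewrite !mulmxA -(mulmxA _ Jy^T) -/Ey -(mulmxA _ ri) riE !mulmxA JJx mul1mx.
  by rewrite -(mulmxA _ ri) rir mulmx1 JJx.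
- rewrite !mulmxA -(mulmxA _ Jx^T) -/Ex -(mulmxA _ r) rE !mulmxA JJy mul1mx.
  rewrite -(mulmxA Jy r A) rA mulmxA.
  rewrite -(mulmxA (Jy *m A) Jy^T Jy) -/Ey -(mulmxA (Jy *m A) Ey r) -rE.
  by rewrite -(mulmxA _ (r *m Ex) Jx^T) -(mulmxA r Ex) EJx !mulmxA.
Qed.

Lemma sel_conj n (S : {set 'I_n}) (M : 'M[C]_n) :
  selm S *m M *m (selm S)^T = \matrix_(a, b) M (enum_val a) (enum_val b).
Proof.
have L : selm S *m M = \matrix_(a, z) M (enum_val a) z.
  apply/matrixP => a z; rewrite !mxE (bigD1 (enum_val a)) //= (@big1 C 0 +%R) ?addr0.
    by rewrite !mxE eqxx mul1r.
  by move=> w nw; rewrite !mxE eq_sym (negbTE nw) mul0r.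
rewrite L; apply/matrixP => a b; rewrite !mxE (bigD1 (enum_val b)) //= (@big1 C 0 +%R) ?addr0.
  by rewrite !mxE eqxx mulr1.
by move=> w nw; rewrite !mxE eq_sym (negbTE nw) mulr0.
Qed.

Theorem lemma4p7 (n : nat) (adj : rel 'I_n) :
  distance_regular adj -> Q_polynomial adj -> pseudo_vertex_transitive adj ->
  forall (i : nat) (x y : 'I_n), (i <= diameter adj)%N ->
    same_spectrum (subconst_adj adj x i) (subconst_adj adj y i).
Proof.
move=> _ _ pvt i x y hi.
have [_ [r [ru rA rE]]] := pvt x y.
have hk : (i < (diameter adj).+1)%N by [].
have rEi := rE (Ordinal hk); simpl in rEi.
have hD : forall z, dual_idem adj z i = (selm (subconst_set adj z i))^T *m selm (subconst_set adj z i).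
  move=> z; rewrite selT_sel; apply/matrixP => u v; rewrite !mxE inE //.
have hS : forall z, subconst_adj adj z i = selm (subconst_set adj z i) *m adjmx adj *m (selm (subconst_set adj z i))^T.
  move=> z; rewrite sel_conj; apply/matrixP => u v; rewrite !mxE //.
rewrite !hD in rEi.
have [PQ QP PB] := alg_core (sel_selT _) (sel_selT _) rEi rA (mulmxV ru) (mulVmx ru).
move=> lam; rewrite /spectrum !hS.
by rewrite (char_poly_sim2 PQ QP PB).
Qed.
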